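(* Let $G=(G_1,\dots,G_N)$ be a finite normal-form game with strategy sets $\mathcal{A}_q$, fix a player $p$, a scalar $s_p>0$ and an arbitrary function $b_p:\mathcal{A}_{-p}\to\mathbb{R}$, and let $\hat G$ be the game with $\hat G_p(a)=s_pG_p(a)+b_p(a_{-p})$ and $\hat G_q=G_q$ for $q\ne p$. Suppose $G$ and $\hat G$ each have a unique maximum-entropy Nash equilibrium. Then the Nash-average ratings $r^{\mathrm{NA}}_p$ of $G$ and $\hat r^{\mathrm{NA}}_p$ of $\hat G$ induce the same ranking of player $p$'s strategies: for all $a_p,\tilde a_p\in\mathcal{A}_p$, $r^{\mathrm{NA}}_p(a_p)<r^{\mathrm{NA}}_p(\tilde a_p)$ iff $\hat r^{\mathrm{NA}}_p(a_p)<\hat r^{\mathrm{NA}}_p(\tilde a_p)$, and $r^{\mathrm{NA}}_p(a_p)=r^{\mathrm{NA}}_p(\tilde a_p)$ iff $\hat r^{\mathrm{NA}}_p(a_p)=\hat r^{\mathrm{NA}}_p(\tilde a_p)$.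
   Context: A Nash equilibrium is a profile of mixed strategies $(\sigma_1,\dots,\sigma_N)$ such that no player can increase its expected payoff by unilaterally deviating; the maximum-entropy Nash equilibrium $\sigma^{\mathrm{MENE}}$ is a Nash equilibrium maximizing the Shannon entropy of the product distribution $\otimes_q\sigma_q$. The Nash-average rating of player $p$'s strategy $a_p$ in game $G$ is $r^{\mathrm{NA}}_p(a_p)=\sum_{a_{-p}\in\mathcal{A}_{-p}}G_p(a_p,a_{-p})\prod_{q\ne p}\sigma^{\mathrm{MENE}}_q(a_q)$, computed with the maximum-entropy Nash equilibrium of that game. *)

(* Defs.v *)
From HB Require Import structures.
From mathcomp Require Import all_boot all_order all_algebra.
From mathcomp Require Import all_classical all_reals all_analysis.
Set Implicit Arguments. Unset Strict Implicit. Unset Printing Implicit Defensive.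
Import Order.TTheory GRing.Theory Num.Theory.
Local Open Scope ring_scope.

Definition profile (N : nat) (A : 'I_N -> finType) := {dffun forall q : 'I_N, A q}.

Definition game (R : realType) (N : nat) (A : 'I_N -> finType) :=
  'I_N -> profile A -> R.

Definition mixed_prof (R : realType) (N : nat) (A : 'I_N -> finType) :=
  forall q : 'I_N, A q -> R.

Definition is_mixed (R : realType) (T : finType) (t : T -> R) : Prop :=
  (forall x, 0 <= t x) /\ \sum_(x : T) t x = 1.

Definition is_mixed_prof (R : realType) N (A : 'I_N -> finType)
  (sigma : mixed_prof R A) : Prop := forall q, is_mixed (sigma q).

Definition prodprob (R : realType) N (A : 'I_N -> finType)
  (sigma : mixed_prof R A) (a : profile A) : R :=
  \prod_(q : 'I_N) sigma q (a q).

Definition dev_payoff (R : realType) N (A : 'I_N -> finType) (G : game R A)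
  (p : 'I_N) (sigma : mixed_prof R A) (tau : A p -> R) : R :=
  \sum_(a : profile A) G p a * (tau (a p) * \prod_(q : 'I_N | q != p) sigma q (a q)).

Definition payoff (R : realType) N (A : 'I_N -> finType) (G : game R A)
  (p : 'I_N) (sigma : mixed_prof R A) : R :=
  \sum_(a : profile A) G p a * prodprob sigma a.

Definition is_nash (R : realType) N (A : 'I_N -> finType) (G : game R A)
  (sigma : mixed_prof R A) : Prop :=
  is_mixed_prof sigma /\
  forall (p : 'I_N) (tau : A p -> R), is_mixed tau ->
    @dev_payoff R N A G p sigma tau <= @payoff R N A G p sigma.

Definition xlnx (R : realType) (x : R) : R := if x == 0 then 0 else x * ln x.

Definition entropy (R : realType) N (A : 'I_N -> finType)
  (sigma : mixed_prof R A) : R :=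
  - \sum_(a : profile A) xlnx (prodprob sigma a).

Definition is_MENE (R : realType) N (A : 'I_N -> finType) (G : game R A)
  (sigma : mixed_prof R A) : Prop :=
  is_nash G sigma /\
  forall sigma' : mixed_prof R A, is_nash G sigma' -> entropy sigma' <= entropy sigma.

Definition unique_MENE (R : realType) N (A : 'I_N -> finType) (G : game R A) : Prop :=
  (exists sigma, is_MENE G sigma) /\
  forall s1 s2 : mixed_prof R A, is_MENE G s1 -> is_MENE G s2 ->
    forall q x, s1 q x = s2 q x.

(* Nash-average rating of strategy ap of player p w.r.t. sigma:
   sum over a_{-p} (i.e. over profiles a with a p = ap) of
   G_p(ap, a_{-p}) * prod_{q <> p} sigma_q(a_q). *)
Definition na_rating (R : realType) N (A : 'I_N -> finType) (G : game R A)
  (sigma : mixed_prof R A) (p : 'I_N) (ap : A p) : R :=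
  \sum_(a : profile A | a p == ap) G p a * \prod_(q : 'I_N | q != p) sigma q (a q).

Definition indep_of (N : nat) (A : 'I_N -> finType) (p : 'I_N) (R : Type)
  (b : profile A -> R) : Prop :=
  forall a a' : profile A, (forall q, q != p -> a q = a' q) -> b a = b a'.

Definition affine_game (R : realType) N (A : 'I_N -> finType) (G : game R A)
  (p : 'I_N) (s : R) (b : profile A -> R) : game R A :=
  fun q a => if q == p then s * G p a + b a else G q a.

(* Main.v *)
Require Import Defs.
Set Implicit Arguments. Unset Strict Implicit.
From HB Require Import structures.
From mathcomp Require Import all_boot all_order all_algebra.
From mathcomp Require Import all_classical all_reals all_analysis.
Import Order.TTheory GRing.Theory Num.Theory.
Local Open Scope ring_scope.

Definition upd N (A : 'I_N -> finType) (p : 'I_N) (a : profile A) (x : A p)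
  : profile A := [ffun q => @dfwith _ (fun q => A q) (fun q => a q) p x q].

Lemma upd_p N (A : 'I_N -> finType) p (a : profile A) x : upd a x p = x.
Proof. rewrite /upd ffunE. exact: dfwith_in. Qed.

Lemma upd_q N (A : 'I_N -> finType) p (a : profile A) (x : A p) q :
  q != p -> upd a x q = a q.
Proof. by move=> h; rewrite /upd ffunE; apply: dfwith_out; rewrite eq_sym. Qed.

Lemma upd_upd N (A : 'I_N -> finType) p (a : profile A) (x y : A p) :
  upd (upd a x) y = upd a y.
Proof.
apply/ffunP => q; case: (eqVneq q p) => [->|h]; first by rewrite !upd_p.
by rewrite !upd_q.
Qed.

Lemma upd_id N (A : 'I_N -> finType) p (a : profile A) : upd a (a p) = a.
Proof.
apply/ffunP => q; case: (eqVneq q p) => [->|h]; first by rewrite !upd_p.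
by rewrite !upd_q.
Qed.

Lemma sum_slice_const (R : realType) N (A : 'I_N -> finType) p (f : profile A -> R)
  (x y : A p) : indep_of p f ->
  \sum_(a : profile A | a p == x) f a = \sum_(a : profile A | a p == y) f a.
Proof.
move=> hf.
rewrite (reindex_onto (fun a : profile A => upd a x) (fun a : profile A => upd a y)) /=;
  last by move=> a /eqP <-; rewrite upd_upd upd_id.
apply: eq_big => a.
  rewrite upd_p eqxx /= upd_upd.
  apply/eqP/eqP => [<-|<-]; first by rewrite upd_p.
  by rewrite upd_id.
move=> _; apply: hf => q hq; by rewrite upd_q.
Qed.

Definition prest (R : realType) N (A : 'I_N -> finType) (p : 'I_N) (sigma : mixed_prof R A)
  (a : profile A) : R := \prod_(q : 'I_N | q != p) sigma q (a q).

Definition Cst (R : realType) N (A : 'I_N -> finType) (p : 'I_N) (b : profile A -> R)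
  (sigma : mixed_prof R A) (x : A p) : R :=
  \sum_(a : profile A | a p == x) b a * prest p sigma a.

Arguments Cst {R N A} p b sigma x.

Lemma Cst_const (R : realType) N (A : 'I_N -> finType) (p : 'I_N) (b : profile A -> R)
  (sigma : mixed_prof R A) : indep_of p b -> forall x y, Cst p b sigma x = Cst p b sigma y.
Proof.
move=> hb x y; apply: sum_slice_const => a a' h.
rewrite (hb a a' h) /prest; congr (_ * _); apply: eq_bigr => q hq; by rewrite h.
Qed.

Lemma sum_split (R : realType) N (A : 'I_N -> finType) (p : 'I_N) (F : profile A -> R) :
  \sum_(a : profile A) F a = \sum_(x : A p) \sum_(a : profile A | a p == x) F a.
Proof. by rewrite (partition_big (fun a : profile A => a p) predT). Qed.

Lemma weighted (R : realType) N (A : 'I_N -> finType) (p : 'I_N) (b : profile A -> R)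
  (sigma : mixed_prof R A) (tau : A p -> R) :
  \sum_(a : profile A) b a * (tau (a p) * prest p sigma a)
  = \sum_(x : A p) tau x * Cst p b sigma x.
Proof.
rewrite (sum_split p); apply: eq_bigr => x _; rewrite /Cst big_distrr /=.
apply: eq_bigr => a /eqP ->; rewrite mulrCA //.
Qed.

Lemma const_sum (R : realType) (T : finType) (C tau1 tau2 : T -> R) :
  (forall x y, C x = C y) -> \sum_x tau1 x = \sum_x tau2 x ->
  \sum_x tau1 x * C x = \sum_x tau2 x * C x.
Proof.
move=> hC hs; case: (pickP (@predT T)) => [y _|h].
  rewrite (eq_bigr (fun x => tau1 x * C y)); last by move=> x _; rewrite (hC x y).
  rewrite [RHS](eq_bigr (fun x => tau2 x * C y)); last by move=> x _; rewrite (hC x y).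
  by rewrite -!big_distrl /= hs.
by rewrite !big_pred0.
Qed.

Lemma payoff_dev (R : realType) N (A : 'I_N -> finType) (H : game R A) (p : 'I_N)
  (sigma : mixed_prof R A) : payoff H p sigma = dev_payoff H sigma (sigma p).
Proof.
apply: eq_bigr => a _; by rewrite /prodprob (bigD1 p).
Qed.

Lemma dev_affine (R : realType) N (A : 'I_N -> finType) (G : game R A) (p : 'I_N) s b
  (sigma : mixed_prof R A) tau :
  dev_payoff (affine_game G p s b) sigma tau =
  s * dev_payoff G sigma tau + \sum_(x : A p) tau x * Cst p b sigma x.
Proof.
rewrite -weighted /dev_payoff big_distrr -big_split /=.
apply: eq_bigr => a _; rewrite /affine_game eqxx mulrDl -mulrA //.
Qed.

Lemma dev_other (R : realType) N (A : 'I_N -> finType) (G : game R A) (p : 'I_N) s b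
  (sigma : mixed_prof R A) q tau : q != p ->
  @dev_payoff _ _ _ (affine_game G p s b) q sigma tau = @dev_payoff _ _ _ G q sigma tau.
Proof.
move=> hq; apply: eq_bigr => a _; by rewrite /affine_game (negbTE hq).
Qed.

Lemma payoff_other (R : realType) N (A : 'I_N -> finType) (G : game R A) (p : 'I_N) s b
  (sigma : mixed_prof R A) q : q != p ->
  payoff (affine_game G p s b) q sigma = payoff G q sigma.
Proof.
move=> hq; apply: eq_bigr => a _; by rewrite /affine_game (negbTE hq).
Qed.

Lemma nash_equiv (R : realType) N (A : 'I_N -> finType) (G : game R A) (p : 'I_N) s b
  (sigma : mixed_prof R A) : 0 < s -> indep_of p b ->
  is_nash (affine_game G p s b) sigma <-> is_nash G sigma.
Proof.
move=> hs hb.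
have key : is_mixed_prof sigma -> forall q (tau : A q -> R), is_mixed tau ->
  (@dev_payoff _ _ _ (affine_game G p s b) q sigma tau <= payoff (affine_game G p s b) q sigma)
  = (@dev_payoff _ _ _ G q sigma tau <= payoff G q sigma).
  move=> hm q tau ht; case: (eqVneq q p) => [eqp|hq]; last first.
    by rewrite dev_other // payoff_other.
  subst q.
  rewrite !payoff_dev !dev_affine.
  rewrite (@const_sum _ _ (Cst p b sigma) (sigma p) tau); last first.
  - by rewrite (hm p).2 ht.2.
  - exact: Cst_const.
  by rewrite lerD2r ler_pM2l.
split=> [[hm hn]|[hm hn]]; split=> // q tau ht.
  by rewrite -key //; apply: hn.
by rewrite key //; apply: hn.
Qed.

Lemma mene_equiv (R : realType) N (A : 'I_N -> finType) (G : game R A) (p : 'I_N) s b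
  (sigma : mixed_prof R A) : 0 < s -> indep_of p b ->
  is_MENE (affine_game G p s b) sigma <-> is_MENE G sigma.
Proof.
move=> hs hb; split=> [[hn hm]|[hn hm]]; split.
- by rewrite -(nash_equiv _ _ hs hb).
- by move=> s' /(nash_equiv _ _ hs hb) /hm.
- by rewrite (nash_equiv _ _ hs hb).
- by move=> s' /(nash_equiv _ _ hs hb) /hm.
Qed.

Lemma na_affine (R : realType) N (A : 'I_N -> finType) (G : game R A) (p : 'I_N) s b
  (sigma : mixed_prof R A) ap :
  na_rating (affine_game G p s b) sigma ap = s * na_rating G sigma ap + Cst p b sigma ap.
Proof.
rewrite /na_rating /Cst big_distrr -big_split /=.
apply: eq_bigr => a _; rewrite /affine_game eqxx mulrDl -mulrA //.
Qed.

Theorem mainTheorem8 (R : realType) (N : nat) (A : 'I_N -> finType)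
  (G : game R A) (p : 'I_N) (s : R) (b : profile A -> R) :
  0 < s -> indep_of p b ->
  unique_MENE G -> unique_MENE (affine_game G p s b) ->
  forall sigma sigmah : mixed_prof R A,
  is_MENE G sigma -> is_MENE (affine_game G p s b) sigmah ->
  forall ap ap' : A p,
    (na_rating G sigma ap < na_rating G sigma ap' <->
     na_rating (affine_game G p s b) sigmah ap <
       na_rating (affine_game G p s b) sigmah ap') /\
    (na_rating G sigma ap = na_rating G sigma ap' <->
     na_rating (affine_game G p s b) sigmah ap =
       na_rating (affine_game G p s b) sigmah ap').
Proof.
move=> hs hb _ [_ hu] sigma sigmah hM hMh ap ap'.
have hM' : is_MENE (affine_game G p s b) sigma by rewrite mene_equiv.
have eqs := hu _ _ hM' hMh.
have -> : sigmah = sigma.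
  apply: functional_extensionality_dep => q; apply: boolp.funext => x.
  by rewrite eqs.
rewrite !na_affine (Cst_const sigma hb ap ap').
split.
  by rewrite ltrD2r ltr_pM2l.
split=> [->//|/addIr/mulfI]; apply; exact: lt0r_neq0.
Qed.
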